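(* Let $c>0$ satisfy $\cosh^2(\tfrac12)+4c^2\sinh^2(\tfrac12)>e^2$. Define $$A^{(1)}=\begin{bmatrix}-1 & c\\ \tfrac{1}{4c} & -1\end{bmatrix},\qquad A^{(2)}=\begin{bmatrix}-1 & \tfrac{1}{4c}\\ c & -1\end{bmatrix},$$ and the $2$-periodic piecewise constant matrix function $A:\mathbb{R}\to\mathbb{R}^{2\times2}$ by $A(t)=A^{(1)}$ for $t\in[2k,2k+1)$ and $A(t)=A^{(2)}$ for $t\in[2k+1,2k+2)$, $k\in\mathbb{Z}$. Then for every $t\in\mathbb{R}$ the matrix $A(t)$ has positive off-diagonal entries and eigenvalues $-\tfrac12$ (its larger, principal eigenvalue) and $-\tfrac32$. Moreover, the matrix $P=e^{A^{(2)}}e^{A^{(1)}}$ has all entries positive and its larger eigenvalue $\mu$ satisfies $\mu>1$; if $w$ is an eigenvector of $P$ for $\mu$ with positive coordinates, then the solution $x(t)$ of $x'=A(t)x$ with $x(0)=w$ satisfies $x(2n)=\mu^n w$ for all $n=1,2,\dots$, so $\|x(2n)\|\to\infty$ as $n\to\infty$.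
   Context: A solution of $x'=A(t)x$ for this piecewise constant $A$ is a continuous function $\xi:\mathbb{R}\to\mathbb{R}^2$ such that $\xi'(t)=A^{(1)}\xi(t)$ for $t\in(2k,2k+1)$ and $\xi'(t)=A^{(2)}\xi(t)$ for $t\in(2k+1,2k+2)$, $k\in\mathbb{Z}$ (with the corresponding one-sided derivatives at integers); for each initial value at time $0$ there is a unique such solution. $\|\cdot\|$ denotes the Euclidean norm on $\mathbb{R}^2$. *)

(* Defs.v *)
From HB Require Import structures.
From mathcomp Require Import all_boot all_order all_algebra.
From mathcomp Require Import all_classical all_reals all_analysis.
Set Implicit Arguments. Unset Strict Implicit. Unset Printing Implicit Defensive.
Import Order.TTheory GRing.Theory Num.Theory.
Import numFieldNormedType.Exports.
Local Open Scope classical_set_scope.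
Local Open Scope ring_scope.

Definition cosh {R : realType} (x : R) : R := (expR x + expR (- x)) / 2.
Definition sinh {R : realType} (x : R) : R := (expR x - expR (- x)) / 2.

Definition expmx {R : realType} (n : nat) (M : 'M[R]_n) : 'M[R]_n :=
  limn (series (fun k : nat => (k`!%:R)^-1 *: M ^+ k)).

Definition A1 {R : realType} (c : R) : 'M[R]_2 :=
  \matrix_(i < 2, j < 2)
    if (i == 0) && (j == 0) then -1
    else if (i == 0) && (j == 1) then c
    else if (i == 1) && (j == 0) then (4 * c)^-1
    else -1.

Definition A2 {R : realType} (c : R) : 'M[R]_2 :=
  \matrix_(i < 2, j < 2)
    if (i == 0) && (j == 0) then -1
    else if (i == 0) && (j == 1) then (4 * c)^-1
    else if (i == 1) && (j == 0) then c
    else -1.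

Definition Apw {R : realType} (c : R) (t : R) : 'M[R]_2 :=
  if ((Num.floor t %% 2)%Z == 0) then A1 c else A2 c.

(* Solution of x' = A(t) x in the sense of the paper: continuous, derivative
   A(t) x(t) at non-integer t, and one-sided derivatives at integers k
   given by the matrix on the adjacent interval. *)
Definition is_solution {R : realType} (c : R) (xi : R -> 'cV[R]_2) : Prop :=
  continuous xi /\
  (forall t : R, (forall k : int, t != k%:~R) ->
     derivable xi t 1 /\ 'D_1 xi t = Apw c t *m xi t) /\
  (forall k : int,
     (fun h : R => h^-1 *: (xi (k%:~R + h) - xi k%:~R)) @ at_right 0
        --> Apw c k%:~R *m xi k%:~R) /\
  (forall k : int,
     (fun h : R => h^-1 *: (xi (k%:~R + h) - xi k%:~R)) @ at_left 0
        --> Apw c (k%:~R - 1) *m xi k%:~R).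

Definition eucl2 {R : realType} (v : 'cV[R]_2) : R :=
  Num.sqrt (v 0 0 ^+ 2 + v 1 0 ^+ 2).

(* Main.v *)
Require Import Defs.
From HB Require Import structures.
From mathcomp Require Import all_boot all_order all_algebra.
From mathcomp Require Import all_classical all_reals all_analysis.
From mathcomp Require Import ring lra.
Import Order.TTheory GRing.Theory Num.Theory.
Import numFieldNormedType.Exports.
Local Open Scope classical_set_scope.
Local Open Scope ring_scope.
Section S.
Variable R : realType.

Definition mk2 (a b c e : R) : 'M[R]_2 :=
  \matrix_(i < 2, j < 2)
    if (i == 0) && (j == 0) then a
    else if (i == 0) && (j == 1) then b
    else if (i == 1) && (j == 0) then c
    else e.

Definition P1 (d : R) := mk2 (1/2) d (4 * d)^-1 (1/2).
Definition P2 (d : R) := mk2 (1/2) (- d) (- (4 * d)^-1) (1/2).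

Ltac mx2 := rewrite /A1 /A2 /P1 /P2 /mk2; apply/matrixP; case=> [[|[|//]] ?]; case=> [[|[|//]] ?];
  rewrite !mxE ?big_ord_recr ?big_ord0 /= ?add0r ?mxE /= ?mulr1n ?mulr0n.

Variable d : R.
Hypothesis hd : d != 0.

Lemma P11 : P1 d * P1 d = P1 d.
Proof. rewrite [_ * _]/(_ *m _); mx2; by field; try exact: hd. Qed.
Lemma P22 : P2 d * P2 d = P2 d.
Proof. rewrite [_ * _]/(_ *m _); mx2; by field; try exact: hd. Qed.
Lemma P12 : P1 d * P2 d = 0.
Proof. rewrite [_ * _]/(_ *m _); mx2; by field; try exact: hd. Qed.
Lemma P21 : P2 d * P1 d = 0.
Proof. rewrite [_ * _]/(_ *m _); mx2; by field; try exact: hd. Qed.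
Lemma P1P2 : P1 d + P2 d = 1.
Proof. by mx2; field. Qed.
Lemma A1dec : A1 d = (- 2^-1) *: P1 d + (- (3/2)) *: P2 d.
Proof. mx2; by field; try exact: hd. Qed.

Lemma A1pow k : A1 d ^+ k = (- 2^-1) ^+ k *: P1 d + (- (3/2)) ^+ k *: P2 d.
Proof.
elim: k => [|k IH]; first by rewrite !expr0 !scale1r P1P2.
rewrite exprS IH {1}A1dec mulrDl !mulrDr -!scalerAl -!scalerAr !scalerA.
by rewrite P11 P22 P12 P21 !scaler0 addr0 add0r -!exprS.
Qed.

Definition E (d : R) := expR (- 2^-1) *: P1 d + expR (- (3/2)) *: P2 d.

Lemma expmxA1 : expmx (A1 d) = E d.
Proof.
rewrite /expmx /E.
have -> : series (fun k : nat => (k`!%:R)^-1 *: A1 d ^+ k) =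
   (fun n => series (exp_coeff (- 2^-1)) n *: P1 d + series (exp_coeff (- (3/2))) n *: P2 d).
  apply/funext => n; rewrite /series /= !scaler_suml -big_split /=.
  apply: eq_bigr => k _; rewrite A1pow scalerDr !scalerA /exp_coeff /=.
  by rewrite ![_ * (k`!%:R)^-1]mulrC.
apply: cvg_lim => //.
apply: cvgD; apply: cvgZr_tmp; exact: is_cvg_series_exp_coeff.
Qed.

End S.
Arguments E {R}. Arguments P1 {R}. Arguments P2 {R}. Arguments mk2 {R}.
Section S2.
Variable R : realType.

Lemma ord2P (j : 'I_2) : j = 0 \/ j = 1.
Proof. by case: j => [[|[|//]] ?]; [left|right]; apply/val_inj. Qed.

Lemma sum2 (F : 'I_2 -> R) : \sum_(i < 2) F i = F 0 + F 1.
Proof. by rewrite big_ord_recr big_ord1 /=; congr (F _ + F _); apply/val_inj. Qed.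

Lemma eig2 (M : 'M[R]_2) a : eigenvalue M a <->
  exists v0 v1 : R, (v0 != 0 \/ v1 != 0) /\
    v0 * M 0 0 + v1 * M 1 0 = a * v0 /\ v0 * M 0 1 + v1 * M 1 1 = a * v1.
Proof.
split.
- move=> /eigenvalueP [v hv vn0]; exists (v 0 0), (v 0 1); split.
    case: (boolP (v 0 0 == 0)) => h0; last by left.
    case: (boolP (v 0 1 == 0)) => h1; last by right.
    exfalso; move/eqP: vn0; apply; apply/matrixP => i j; rewrite [i]ord1; case: (ord2P j) => ->.
      by rewrite mxE; apply/eqP; exact: h0.
    by rewrite mxE; apply/eqP; exact: h1.
  have e0 := congr1 (fun m : 'M[R]_(1,2) => m 0 0) hv; have e1 := congr1 (fun m : 'M[R]_(1,2) => m 0 1) hv.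
  move: e0 e1 => /=; rewrite !mxE !sum2 => e0 e1.
  by split.
- move=> [v0 [v1 [hn [e0 e1]]]]; apply/eigenvalueP.
  exists (\matrix_(i < 1, j < 2) if j == 0 then v0 else v1).
    apply/matrixP => i j; rewrite [i]ord1; case: (ord2P j) => ->;
    by rewrite !mxE sum2 !mxE /=.
  apply/negP => /eqP h; case: hn => /negP; apply.
    by have := congr1 (fun m : 'M[R]_(1,2) => m 0 0) h; rewrite !mxE /= => ->.
  by have := congr1 (fun m : 'M[R]_(1,2) => m 0 1) h; rewrite !mxE /= => ->.
Qed.

Lemma eigA1 (d : R) a : d != 0 ->
  eigenvalue (A1 d) a <-> (a = - 2^-1 \/ a = - (3 / 2)).
Proof.
move=> hd; rewrite eig2 /A1 !mxE /=.
set q := (4 * d)^-1.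
have hqd : q * d = 4^-1 by rewrite /q; field.
split.
- clearbody q; move=> [v0 [v1 [hn [e0 e1]]]].
  have h0 : (a + 1 - 2^-1) * (a + 1 + 2^-1) * v0 = 0.
    have -> : (a + 1 - 2^-1) * (a + 1 + 2^-1) * v0 =
      -(a+1)*(v0 * -1 + v1 * q - a * v0) - q*(v0 * d + v1 * -1 - a * v1) + (q*d - 4^-1)*v0
      by field.
    by rewrite e0 e1 hqd !subrr; ring.
  have h1 : (a + 1 - 2^-1) * (a + 1 + 2^-1) * v1 = 0.
    have -> : (a + 1 - 2^-1) * (a + 1 + 2^-1) * v1 =
      -(a+1)*(v0 * d + v1 * -1 - a * v1) - d*(v0 * -1 + v1 * q - a * v0) + (q*d - 4^-1)*v1
      by field.
    by rewrite e0 e1 hqd !subrr; ring.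
  have : (a + 1 - 2^-1) * (a + 1 + 2^-1) = 0.
    case: hn => hn; [move/eqP: h0|move/eqP: h1]; by rewrite mulf_eq0 (negbTE hn) orbF => /eqP.
  move/eqP; rewrite mulf_eq0 => /orP [] /eqP h; [left|right].
    by apply/eqP; rewrite -subr_eq0; apply/eqP; rewrite -h; field.
  by apply/eqP; rewrite -subr_eq0; apply/eqP; rewrite -h; field.
- move=> [] ->.
    exists 1, (2 * d); split; first by left; exact: oner_neq0.
    by split; rewrite /q; field.
  exists 1, (- (2 * d)); split; first by left; exact: oner_neq0.
  by split; rewrite /q; field.
Qed.

End S2.
Section S3.
Variable R : realType.

Lemma scalar_ode (f : R -> R) (l a : R) : continuous f ->
  (forall t, a < t < a + 1 -> is_derive t 1 f (l * f t)) ->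
  f (a + 1) = expR l * f a.
Proof.
move=> fc fd.
pose h := (expR \o (fun t : R => (- l) * t)).
pose g := h * f.
have gd : forall t, t \in `]a, a + 1[ -> is_derive t 1 g ((fun _ => 0) t).
  move=> t; rewrite in_itv /= => ht.
  have hd : is_derive t 1 (fun t : R => (- l) * t) (- l).
    have := @is_deriveZ R R R id (- l) t 1 1 (is_derive_id _ _).
    by rewrite /GRing.scale /= mulr1.
  have hh : is_derive t 1 h (expR ((- l) * t) * (- l)) by exact: is_derive1_comp.
  apply: is_derive_eq; first exact: (is_deriveM hh (fd t ht)).
  rewrite /h /= /GRing.scale /=; ring.
have gc : {within `[a, a + 1], continuous g}.
  apply: continuous_subspaceT => x.
  apply: continuousM; last exact: fc.
  apply: continuous_comp; last exact: continuous_expR.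
  exact: mulrl_continuous.
have ha : a < a + 1 by rewrite ltrDl.
have [c _] := MVT ha gd gc.
move/eqP; rewrite mul0r subr_eq0 => /eqP e0.
have e : expR (- l * (a + 1)) * f (a + 1) = expR (- l * a) * f a by exact: e0.
have -> : f (a + 1) = expR (l * (a + 1)) * (expR (- l * (a + 1)) * f (a + 1)).
  by rewrite mulrA -expRD mulNr addrN expR0 mul1r.
rewrite e mulrA -expRD; congr (expR _ * _); ring.
Qed.
End S3.
Section S4.
Variable R : realType.

Lemma entry_cont m n (i : 'I_m) (j : 'I_n) : continuous (fun M : 'M[R]_(m, n) => M i j).
Proof.
move=> M; have FM := @mx_nbhs_filter m n R M.
apply/cvgrPdist_le => e e0.
near=> N.
have hN : `|M - N| <= e.
  near: N; exact: ((@cvgrPdist_le _ _ _ _ _ id M).1 cvg_id e e0).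
apply: le_trans hN.
rewrite [leRHS]/Num.Def.normr /= mx_normrE.
by apply: le_trans (le_bigmax _ _ (i, j)); rewrite !mxE.
Unshelve. all: by end_near.
Qed.

Lemma ode_step (d a : R) (xi : R -> 'cV[R]_2) : d != 0 -> continuous xi ->
  (forall t, a < t < a + 1 -> derivable xi t 1 /\ 'D_1 xi t = A1 d *m xi t) ->
  xi (a + 1) = E d *m xi a.
Proof.
move=> hd xc xd.
have cc i : continuous (fun t => xi t i 0).
  move=> t; apply: (@continuous_comp _ _ _ xi (fun M : 'cV[R]_2 => M i 0)); [exact: xc|exact: entry_cont].
have dc i t : a < t < a + 1 -> is_derive t 1 (fun t => xi t i 0) ((A1 d *m xi t) i 0).
  move=> ht; have [dx Dx] := xd t ht.
  have dxi := (derivable_mxP xi t 1).1 dx i 0.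
  apply: DeriveDef => //.
  by rewrite -Dx derive_mx // mxE.
have key l0 l1 lam : l0 * A1 d 0 0 + l1 * A1 d 1 0 = lam * l0 ->
   l0 * A1 d 0 1 + l1 * A1 d 1 1 = lam * l1 ->
   l0 * xi (a + 1) 0 0 + l1 * xi (a + 1) 1 0 = expR lam * (l0 * xi a 0 0 + l1 * xi a 1 0).
  move=> e0 e1.
  have := @scalar_ode R (l0 \*: (fun t => xi t 0 0) + l1 \*: (fun t => xi t 1 0)) lam a.
  apply.
    move=> t; apply: continuousD; apply: continuousZ; (exact: cst_continuous || exact: cc).
  move=> t ht; apply: is_derive_eq.
    apply: is_deriveD; apply: is_deriveZ; [exact: dc 0 t ht|exact: dc 1 t ht].
  rewrite !mxE !sum2 /GRing.scale /=.
  have -> : l0 * (A1 d 0 0 * xi t 0 0 + A1 d 0 1 * xi t 1 0) +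
     l1 * (A1 d 1 0 * xi t 0 0 + A1 d 1 1 * xi t 1 0) =
     (l0 * A1 d 0 0 + l1 * A1 d 1 0) * xi t 0 0 + (l0 * A1 d 0 1 + l1 * A1 d 1 1) * xi t 1 0
    by ring.
  have -> : (l0 \*: (fun t : R => xi t 0 0) + l1 \*: (fun t : R => xi t 1 0)) t
    = l0 * xi t 0 0 + l1 * xi t 1 0 by [].
  rewrite e0 e1; ring.
have k1 : 1 * xi (a + 1) 0 0 + 2 * d * xi (a + 1) 1 0 =
    expR (- 2^-1) * (1 * xi a 0 0 + 2 * d * xi a 1 0).
  by apply: key; rewrite /A1 !mxE /=; field.
have k2 : 1 * xi (a + 1) 0 0 + - (2 * d) * xi (a + 1) 1 0 =
    expR (- (3 / 2)) * (1 * xi a 0 0 + - (2 * d) * xi a 1 0).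
  by apply: key; rewrite /A1 !mxE /=; field.
apply/matrixP => i j; rewrite [j]ord1; rewrite !mxE sum2 /E /P1 /P2 /mk2 !mxE /=.
case: (ord2P i) => -> /=.
  have -> : xi (a + 1) 0 0 = ((1 * xi (a + 1) 0 0 + 2 * d * xi (a + 1) 1 0) +
      (1 * xi (a + 1) 0 0 + - (2 * d) * xi (a + 1) 1 0)) / 2 by field.
  by rewrite k1 k2; field.
have -> : xi (a + 1) 1 0 = ((1 * xi (a + 1) 0 0 + 2 * d * xi (a + 1) 1 0) -
      (1 * xi (a + 1) 0 0 + - (2 * d) * xi (a + 1) 1 0)) / (4 * d) by field.
by rewrite k1 k2; field.
Qed.
End S4.
Section S5.
Variable R : realType.

Lemma floor_in (z : int) (t : R) : z%:~R < t < z%:~R + 1 ->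
  Num.floor t = z /\ (forall k : int, t != k%:~R).
Proof.
move=> /andP [h1 h2]; split.
  by apply: floor_def; rewrite intrD ltW // h2.
move=> k; apply/eqP => tk; move: h1 h2; rewrite tk -[1]/(1%:~R) -intrD !ltr_int.
by rewrite ltzD1 => h1 h2; have := lt_le_trans h1 h2; rewrite ltxx.
Qed.

Lemma Apw_even (c : R) (m : nat) t : (m.*2)%:R < t < (m.*2)%:R + 1 ->
  Apw c t = A1 c /\ (forall k : int, t != k%:~R).
Proof.
move=> h; have [fl ni] := @floor_in (m.*2)%:Z t h; split => //.
by rewrite /Apw fl modz_nat modn2 odd_double.
Qed.

Lemma Apw_odd (c : R) (m : nat) t : (m.*2)%:R + 1 < t < (m.*2)%:R + 1 + 1 ->
  Apw c t = A2 c /\ (forall k : int, t != k%:~R).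
Proof.
move=> h.
have h' : ((m.*2).+1%:Z)%:~R < t < ((m.*2).+1%:Z)%:~R + 1.
  by rewrite -[((m.*2).+1)%:Z%:~R]/((m.*2).+1%:R) -natr1.
have [fl ni] := floor_in _ _ h'; split => //.
by rewrite /Apw fl modz_nat modn2 /= odd_double.
Qed.

Lemma A2E (c : R) : c != 0 -> A2 c = A1 (4 * c)^-1.
Proof.
move=> hc; rewrite /A1 /A2; apply/matrixP => i j; rewrite !mxE.
case: (ord2P i) => ->; case: (ord2P j) => -> //=.
by field.
Qed.

Lemma Epos (d : R) : 0 < d -> forall i j, 0 < E d i j.
Proof.
move=> hd.
have he : expR (- (3/2)) < expR (- 2^-1) :> R.
  by rewrite ltr_expR ltrN2; lra.
have e1 := expR_gt0 (- 2^-1 : R); have e3 := expR_gt0 (- (3/2) : R).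
move=> i j; rewrite /E /P1 /P2 /mk2 !mxE.
case: (ord2P i) => ->; case: (ord2P j) => -> /=.
- lra.
- rewrite mulrN subr_gt0 ltr_pM2r //.
- rewrite mulrN subr_gt0 ltr_pM2r // invr_gt0 mulr_gt0 //.
- lra.
Qed.

End S5.
Theorem mainTheorem1 (R : realType) (c : R) (hc : 0 < c)
  (hcond : cosh (2^-1) ^+ 2 + 4 * c ^+ 2 * sinh (2^-1) ^+ 2 > expR 1 ^+ 2) :
  (forall t : R,
     0 < Apw c t 0 1 /\ 0 < Apw c t 1 0 /\
     (forall a : R, eigenvalue (Apw c t) a <-> (a = - 2^-1 \/ a = - (3 / 2)))) /\
  let P := expmx (A2 c) *m expmx (A1 c) in
  (forall i j, 0 < P i j) /\
  exists mu : R,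
    [/\ eigenvalue P mu, (forall a : R, eigenvalue P a -> a <= mu), 1 < mu &
     forall w : 'cV[R]_2,
       0 < w 0 0 -> 0 < w 1 0 -> P *m w = mu *: w ->
       forall xi : R -> 'cV[R]_2, is_solution c xi -> xi 0 = w ->
         (forall n : nat, (0 < n)%N -> xi (n.*2%:R) = mu ^+ n *: w) /\
         (fun n : nat => eucl2 (xi (n.*2%:R))) @ \oo --> +oo].
Proof.
have c0 : c != 0 by rewrite gt_eqF.
have c4 : 0 < (4 * c)^-1 by rewrite invr_gt0 mulr_gt0.
have c40 : (4 * c)^-1 != 0 by rewrite gt_eqF.
split.
  move=> t; have [d [hd0 hAd]] : exists d, 0 < d /\ Apw c t = A1 d.
    by rewrite /Apw; case: ifP => _; [exists c | exists (4 * c)^-1; rewrite A2E].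
  rewrite hAd; split; first by rewrite /A1 mxE.
  split; first by rewrite /A1 mxE /= invr_gt0 mulr_gt0.
  by move=> a; apply: eigA1; rewrite gt_eqF.
move=> P.
have PE : P = E (4 * c)^-1 *m E c by rewrite /P A2E // !expmxA1.
have Ppos : forall i j, 0 < P i j.
  move=> i j; rewrite PE mxE sum2.
  by rewrite addr_gt0 // mulr_gt0 // Epos.
split => //.
have Psym : P 1 0 = P 0 1.
  by rewrite PE !mxE !sum2 /E /P1 /P2 /mk2 !mxE /=; field.
have r1 : 1 < P 1 1.
  set u := expR (2^-1 : R).
  have u0 : 0 < u := expR_gt0 _.
  have e1 : expR (- 2^-1) = u^-1 by rewrite expRN.
  have e3 : expR (- (3 / 2)) = (u ^+ 3)^-1 by rewrite expRN expRM_natl.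
  have eE : expR 1 = u ^+ 2 by rewrite -expRM_natl divff.
  move: hcond; rewrite /cosh /sinh eE e1 -/u => hc'.
  have key : P 1 1 * u ^+ 4 = ((u + u^-1) / 2) ^+ 2 + 4 * c ^+ 2 * ((u - u^-1) / 2) ^+ 2.
    rewrite PE !mxE !sum2 /E /P1 /P2 /mk2 !mxE /= e1 e3.
    field. rewrite gt_eqF //.
  have : 1 * u ^+ 4 < P 1 1 * u ^+ 4 by rewrite mul1r key; move: hc'; rewrite -exprM.
  by rewrite ltr_pM2r // exprn_gt0.
set p := P 0 0; set q := P 0 1; set r := P 1 1.
have q0 : 0 < q := Ppos 0 1.
set S := Num.sqrt ((p - r) ^+ 2 + 4 * q ^+ 2).
have S0 : 0 <= S := sqrtr_ge0 _.
have S2 : S ^+ 2 = (p - r) ^+ 2 + 4 * q ^+ 2.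
  by rewrite sqr_sqrtr // addr_ge0 ?sqr_ge0 // mulr_ge0 ?sqr_ge0.
set mu := (p + r + S) / 2.
have hmu : (mu - p) * (mu - r) = q ^+ 2.
  have -> : (mu - p) * (mu - r) = (S ^+ 2 - (p - r) ^+ 2) / 4 by rewrite /mu; field.
  by rewrite S2; field.
have mp : 0 <= mu - p by rewrite /mu; nra.
have mr : 0 <= mu - r by rewrite /mu; nra.
exists mu; split.
- apply: (proj2 (@eig2 R P mu)); exists q, (mu - p); split; first by left; rewrite gt_eqF.
  rewrite Psym -/q -/p -/r; split; first by ring.
  apply/eqP; rewrite -subr_eq0; apply/eqP.
  have -> : q * q + (mu - p) * r - mu * (mu - p) = q ^+ 2 - (mu - p) * (mu - r) by ring.
  by rewrite hmu subrr.
- move=> a /(proj1 (@eig2 R P a)) [v0 [v1 [hn [e0 e1]]]].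
  rewrite Psym -/p -/q -/r in e0 e1.
  have D0 : ((p - a) * (r - a) - q ^+ 2) * v0 = 0.
    have -> : ((p - a) * (r - a) - q ^+ 2) * v0 =
      (r - a) * (v0 * p + v1 * q - a * v0) - q * (v0 * q + v1 * r - a * v1) by ring.
    by rewrite e0 e1 !subrr; ring.
  have D1 : ((p - a) * (r - a) - q ^+ 2) * v1 = 0.
    have -> : ((p - a) * (r - a) - q ^+ 2) * v1 =
      (p - a) * (v0 * q + v1 * r - a * v1) - q * (v0 * p + v1 * q - a * v0) by ring.
    by rewrite e0 e1 !subrr; ring.
  have D : (p - a) * (r - a) - q ^+ 2 = 0.
    case: hn => hn; [move/eqP: D0|move/eqP: D1]; by rewrite mulf_eq0 (negbTE hn) orbF => /eqP.
  rewrite leNgt; apply/negP => ha.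
  have h1 : 0 < (a - mu) * (a - r) by rewrite mulr_gt0 //; lra.
  have h2 : 0 <= (mu - p) * (a - mu) by rewrite mulr_ge0 //; lra.
  have h3 : (p - a) * (r - a) - q ^+ 2 = (a - mu) * (a - r) + (mu - p) * (a - mu).
    by rewrite -hmu; ring.
  rewrite h3 in D; lra.
- move: r1; rewrite -/r; lra.
have mu1 : 1 < mu by move: r1; rewrite -/r; lra.
move=> w w0 w1 Pw xi [xc [xd _]] x0.
have step m : xi ((m.+1).*2%:R) = P *m xi (m.*2%:R).
  have s1 : xi ((m.*2)%:R + 1) = E c *m xi (m.*2%:R).
    apply: ode_step => // t ht; have [hA ni] := @Apw_even R c m t ht.
    by rewrite -hA; exact: xd.
  have s2 : xi ((m.*2)%:R + 1 + 1) = E (4 * c)^-1 *m xi ((m.*2)%:R + 1).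
    apply: ode_step => // t ht; have [hA ni] := @Apw_odd R c m t ht.
    by rewrite -A2E // -hA; exact: xd.
  by rewrite PE -mulmxA -s1 -s2 doubleS -!natr1.
have pw m : xi (m.*2%:R) = mu ^+ m *: w.
  elim: m => [|m IH]; first by rewrite double0 mulr0n expr0 scale1r.
  by rewrite step IH -scalemxAr Pw scalerA -exprSr.
split; first by move=> n _; exact: pw.
have bern n : 1 + n%:R * (mu - 1) <= mu ^+ n.
  elim: n => [|n IH]; first by rewrite mul0r addr0 expr0.
  rewrite exprS -natr1.
  have hn : 0 <= n%:R :> R by [].
  have h1 : mu * (1 + n%:R * (mu - 1)) <= mu * mu ^+ n.
    by rewrite ler_wpM2l //; lra.
  have h2 : 0 <= n%:R * ((mu - 1) * (mu - 1)) by rewrite mulr_ge0 // mulr_ge0 //; lra.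
  apply: le_trans h1.
  rewrite -subr_ge0.
  have -> : mu * (1 + n%:R * (mu - 1)) - (1 + (n%:R + 1) * (mu - 1)) = n%:R * ((mu - 1) * (mu - 1)) by ring.
  exact: h2.
apply/cvgryPge => A.
near=> n.
rewrite pw /eucl2 !mxE.
have h1 : mu ^+ n * w 0 0 <= Num.sqrt ((mu ^+ n * w 0 0) ^+ 2 + (mu ^+ n * w 1 0) ^+ 2).
  rewrite -[X in X <= _]ger0_norm ?mulr_ge0 ?exprn_ge0 //; try lra.
  by rewrite -sqrtr_sqr ler_wsqrtr // lerDl sqr_ge0.
apply: le_trans h1.
have hb := bern n.
have hn : A / ((mu - 1) * w 0 0) <= n%:R by near: n; exact: nbhs_infty_ger.
have hmw : 0 < (mu - 1) * w 0 0 by rewrite mulr_gt0 // subr_gt0.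
rewrite ler_pdivrMr // in hn.
nra.
Unshelve. all: by end_near.
Qed.
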